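(* Let $A>0$ and let $f:[0,A]\rightarrow\mathbb{R}$ be a continuous $3$-convex function. Then \[ f(x)+f(y)+f(z)+f(x+y+z)\geq f(x+y)+f(y+z)+f(z+x)+f(0) \] for all $x,y,z\in[0,A]$ with $x+y+z\leq A$. If in addition $f(0)\geq0$, then \[ f(x)+f(y)+f(z)+f(x+y+z)\geq f(x+y)+f(y+z)+f(z+x) \] for all such $x,y,z$.
   Context: A function $f$ defined on an interval $I$ is called $3$-convex if for all $x_0<x_1<x_2<x_3$ in $I$ the third-order divided difference $[x_0,x_1,x_2,x_3;f]=\sum_{j=0}^{3}\frac{f(x_j)}{\prod_{k\neq j}(x_j-x_k)}$ is nonnegative. *)

(* Defs.v *)
From Stdlib Require Import Reals.
Open Scope R_scope.

Definition divdiff3 (f : R -> R) (x0 x1 x2 x3 : R) : R :=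
  f x0 / ((x0 - x1) * (x0 - x2) * (x0 - x3))
  + f x1 / ((x1 - x0) * (x1 - x2) * (x1 - x3))
  + f x2 / ((x2 - x0) * (x2 - x1) * (x2 - x3))
  + f x3 / ((x3 - x0) * (x3 - x1) * (x3 - x2)).

Definition three_convex_on (I : R -> Prop) (f : R -> R) : Prop :=
  forall x0 x1 x2 x3, I x0 -> I x1 -> I x2 -> I x3 ->
    x0 < x1 -> x1 < x2 -> x2 < x3 -> 0 <= divdiff3 f x0 x1 x2 x3.

Definition interval0A (A : R) : R -> Prop := fun x => 0 <= x <= A.

Definition continuous_on_0A (A : R) (f : R -> R) : Prop :=
  forall x, interval0A A x -> continue_in f (interval0A A) x.

(* Main.v *)
Require Import Defs.
From Stdlib Require Import Reals Lra.
Open Scope R_scope.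

Definition D2 (f : R -> R) (a b c : R) : R :=
  f a / ((a - b) * (a - c)) + f b / ((b - a) * (b - c)) + f c / ((c - a) * (c - b)).

Ltac nz := repeat match goal with
  | |- context [/ (?u - ?v)] => let H := fresh in assert (H : u - v <> 0) by lra; revert H
  end; intros.

Lemma stepc f a b c d : a < b -> b < c -> c < d ->
  D2 f a b d - D2 f a b c = (d - c) * divdiff3 f a b c d.
Proof.
  intros. unfold D2, divdiff3.
  assert (a - b <> 0) by lra. assert (a - c <> 0) by lra. assert (a - d <> 0) by lra.
  assert (b - c <> 0) by lra. assert (b - d <> 0) by lra. assert (c - d <> 0) by lra.
  assert (b - a <> 0) by lra. assert (c - a <> 0) by lra. assert (d - a <> 0) by lra.
  assert (c - b <> 0) by lra. assert (d - b <> 0) by lra. assert (d - c <> 0) by lra.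
  field; repeat split; auto.
Qed.

Lemma stepb f a b c d : a < b -> b < c -> c < d ->
  D2 f a c d - D2 f a b d = (c - b) * divdiff3 f a b c d.
Proof.
  intros. unfold D2, divdiff3.
  assert (a - b <> 0) by lra. assert (a - c <> 0) by lra. assert (a - d <> 0) by lra.
  assert (b - c <> 0) by lra. assert (b - d <> 0) by lra. assert (c - d <> 0) by lra.
  assert (b - a <> 0) by lra. assert (c - a <> 0) by lra. assert (d - a <> 0) by lra.
  assert (c - b <> 0) by lra. assert (d - b <> 0) by lra. assert (d - c <> 0) by lra.
  field; repeat split; auto.
Qed.

Lemma stepa f a b c d : a < b -> b < c -> c < d ->
  D2 f b c d - D2 f a c d = (b - a) * divdiff3 f a b c d.
Proof.
  intros. unfold D2, divdiff3.
  assert (a - b <> 0) by lra. assert (a - c <> 0) by lra. assert (a - d <> 0) by lra.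
  assert (b - c <> 0) by lra. assert (b - d <> 0) by lra. assert (c - d <> 0) by lra.
  assert (b - a <> 0) by lra. assert (c - a <> 0) by lra. assert (d - a <> 0) by lra.
  assert (c - b <> 0) by lra. assert (d - b <> 0) by lra. assert (d - c <> 0) by lra.
  field; repeat split; auto.
Qed.

Lemma mono A f : three_convex_on (interval0A A) f ->
  forall a b c a' b' c', 0 <= a -> c' <= A -> a < b -> b < c -> a' < b' -> b' < c' ->
  a <= a' -> b <= b' -> c <= c' -> D2 f a b c <= D2 f a' b' c'.
Proof.
  intros H a b c a' b' c' H0 HA H1 H2 H3 H4 H5 H6 H7.
  assert (E1 : D2 f a b c <= D2 f a b c').
  { destruct (Rle_lt_or_eq_dec _ _ H7) as [h|h]; [|subst; lra].
    pose proof (stepc f a b c c' H1 H2 h).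
    assert (0 <= (c' - c) * divdiff3 f a b c c'); [|lra].
    apply Rmult_le_pos; [lra|]. apply H; unfold interval0A; lra. }
  assert (E2 : D2 f a b c' <= D2 f a b' c').
  { destruct (Rle_lt_or_eq_dec _ _ H6) as [h|h]; [|subst; lra].
    assert (b' < c') by lra.
    pose proof (stepb f a b b' c' H1 h H8).
    assert (0 <= (b' - b) * divdiff3 f a b b' c'); [|lra].
    apply Rmult_le_pos; [lra|]. apply H; unfold interval0A; lra. }
  assert (E3 : D2 f a b' c' <= D2 f a' b' c').
  { destruct (Rle_lt_or_eq_dec _ _ H5) as [h|h]; [|subst; lra].
    pose proof (stepa f a a' b' c' h H3 H4).
    assert (0 <= (a' - a) * divdiff3 f a a' b' c'); [|lra].
    apply Rmult_le_pos; [lra|]. apply H; unfold interval0A; lra. }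
  lra.
Qed.

Lemma shiftD2 f z a b c : a < b -> b < c ->
  D2 (fun t => f (t + z) - f t) a b c = D2 f (a + z) (b + z) (c + z) - D2 f a b c.
Proof.
  intros. unfold D2.
  replace (a + z - (b + z)) with (a - b) by ring.
  replace (a + z - (c + z)) with (a - c) by ring.
  replace (b + z - (a + z)) with (b - a) by ring.
  replace (b + z - (c + z)) with (b - c) by ring.
  replace (c + z - (a + z)) with (c - a) by ring.
  replace (c + z - (b + z)) with (c - b) by ring.
  assert (a - b <> 0) by lra. assert (a - c <> 0) by lra.
  assert (b - c <> 0) by lra. assert (b - a <> 0) by lra. assert (c - a <> 0) by lra.
  assert (c - b <> 0) by lra.
  field; repeat split; auto.
Qed.

Lemma chord g t s : 0 < t -> t < s -> 0 <= D2 g 0 t s ->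
  g t * s <= (s - t) * g 0 + t * g s.
Proof.
  intros. assert (E : t * s * (s - t) * D2 g 0 t s = (s - t) * g 0 + t * g s - g t * s).
  { unfold D2. assert (t <> 0) by lra. assert (s <> 0) by lra. assert (s - t <> 0) by lra.
    assert (t - s <> 0) by lra. field; repeat split; auto; lra. }
  assert (0 <= t * s * (s - t) * D2 g 0 t s).
  { apply Rmult_le_pos; auto. apply Rmult_le_pos; [|lra]. apply Rmult_le_pos; lra. }
  lra.
Qed.

Lemma main A f : three_convex_on (interval0A A) f ->
  forall x y z, 0 < x -> 0 < y -> 0 < z -> x + y + z <= A ->
     f x + f y + f z + f (x + y + z) >= f (x + y) + f (y + z) + f (z + x) + f 0.
Proof.
  intros H x y z Hx Hy Hz HA.
  set (g := fun t => f (t + z) - f t).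
  assert (C : forall t s, 0 < t -> t < s -> s + z <= A -> g t * s <= (s - t) * g 0 + t * g s).
  { intros t s Ht Hs HsA. apply chord; auto. unfold g. rewrite shiftD2 by lra.
    assert (D2 f 0 t s <= D2 f (0 + z) (t + z) (s + z)); [|lra].
    apply (mono A); auto; lra. }
  pose proof (C x (x + y) Hx ltac:(lra) ltac:(lra)) as C1.
  pose proof (C y (x + y) Hy ltac:(lra) ltac:(lra)) as C2.
  assert (S : (g x + g y) * (x + y) <= (g 0 + g (x + y)) * (x + y)) by lra.
  apply Rmult_le_reg_r in S; [|lra].
  unfold g in S. replace (0 + z) with z in S by ring.
  replace (z + x) with (x + z) by ring.
  lra.
Qed.

Theorem proposition1 (A : R) (f : R -> R) :
  0 < A ->
  continuous_on_0A A f ->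
  three_convex_on (interval0A A) f ->
  (forall x y z, 0 <= x -> 0 <= y -> 0 <= z -> x + y + z <= A ->
     f x + f y + f z + f (x + y + z) >= f (x + y) + f (y + z) + f (z + x) + f 0)
  /\
  (0 <= f 0 ->
   forall x y z, 0 <= x -> 0 <= y -> 0 <= z -> x + y + z <= A ->
     f x + f y + f z + f (x + y + z) >= f (x + y) + f (y + z) + f (z + x)).
Proof.
  intros HA _ H.
  assert (P : forall x y z, 0 <= x -> 0 <= y -> 0 <= z -> x + y + z <= A ->
     f x + f y + f z + f (x + y + z) >= f (x + y) + f (y + z) + f (z + x) + f 0).
  { intros x y z Hx Hy Hz HS.
    destruct (Rle_lt_or_eq_dec _ _ Hx) as [hx|hx]; [|subst;
      replace (0 + y + z) with (y + z) by ring; replace (0 + y) with y by ring;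
      replace (z + 0) with z by ring; lra].
    destruct (Rle_lt_or_eq_dec _ _ Hy) as [hy|hy]; [|subst;
      replace (x + 0 + z) with (z + x) by ring; replace (x + 0) with x by ring;
      replace (0 + z) with z by ring; lra].
    destruct (Rle_lt_or_eq_dec _ _ Hz) as [hz|hz]; [|subst;
      replace (x + y + 0) with (x + y) by ring; replace (y + 0) with y by ring;
      replace (0 + x) with x by ring; lra].
    apply (main A); auto. }
  split; auto. intros H0 x y z Hx Hy Hz HS. pose proof (P x y z Hx Hy Hz HS). lra.
Qed.
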